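(* Let $N\ge2$ and $\gamma^1,\dots,\gamma^N>0$ with $\gamma^N=\max\{\gamma^1,\dots,\gamma^N\}$, and let $$\Gamma:=\mathrm{diag}\{\gamma^1,\dots,\gamma^{N-1}\}-\tfrac1N\mathbb 1_{N-1}\mathbb 1_{N-1}^\top\mathrm{diag}\{\gamma^1-\gamma^N,\dots,\gamma^{N-1}-\gamma^N\}\in\mathbb R^{(N-1)\times(N-1)}.$$ Then $\Gamma$ is positive definite, i.e. $b^\top\Gamma b>0$ for all $b\in\mathbb R^{N-1}\setminus\{0\}$, and $\Gamma$ has only positive eigenvalues.
   Context: $\mathbb 1_{N-1}$ is the all-ones vector in $\mathbb R^{N-1}$. Positive definiteness here does not require symmetry ($\Gamma$ is in general not symmetric). *)

(* Defs.v *)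
From HB Require Import structures.
From mathcomp Require Import all_boot all_order all_algebra.
From mathcomp Require Import complex.
Set Implicit Arguments. Unset Strict Implicit. Unset Printing Implicit Defensive.
Import Order.TTheory GRing.Theory Num.Theory.
Local Open Scope ring_scope.

(* gamma is indexed 1..N as in the paper: gamma k = gamma^k.
   Row/column index i : 'I_(N-1) (0-based) corresponds to paper index i+1. *)
Definition Gamma_mx (R : rcfType) (N : nat) (gamma : nat -> R) : 'M[R]_(N - 1) :=
  diag_mx (\row_(i < N - 1) gamma i.+1)
  - (N%:R)^-1 *: ((const_mx 1 : 'cV[R]_(N - 1)) *m (const_mx 1 : 'rV[R]_(N - 1))
                  *m diag_mx (\row_(i < N - 1) (gamma i.+1 - gamma N))).

(* Main.v *)
Require Import Defs.
From HB Require Import structures.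
From mathcomp Require Import all_boot all_order all_algebra.
From mathcomp Require Import complex.
From mathcomp Require Import ring lra zify.
Import Order.TTheory GRing.Theory Num.Theory.
Local Open Scope ring_scope.
Local Open Scope complex_scope.
Lemma GammaE (R : rcfType) (N : nat) (gamma : nat -> R) i j :
  Gamma_mx N gamma i j = (i == j)%:R * gamma i.+1 - N%:R^-1 * (gamma j.+1 - gamma N).
Proof.
rewrite /Gamma_mx mul_mx_diag !mxE big_ord1 !mxE !mul1r.
by rewrite mulr_natl.
Qed.
Lemma eig_tr (F : fieldType) n (A : 'M[F]_n) a : eigenvalue A a -> eigenvalue A^T a.
Proof.
rewrite !eigenvalue_root_char /char_poly -det_tr.
suff -> : (char_poly_mx A)^T = char_poly_mx A^T by [].
apply/matrixP => i j; rewrite !mxE eq_sym //.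
Qed.

Lemma trmap (R : rcfType) n (A : 'M[R]_n) k i :
  (map_mx (fun x : R => x%:C) A)^T k i = (A i k)%:C.
Proof. by rewrite !mxE. Qed.

Lemma eig_part (R : rcfType) (N : nat) (gamma : nat -> R)
  (hN : (2 <= N)%N)
  (hpos : forall k : nat, (1 <= k <= N)%N -> 0 < gamma k)
  (hmax : forall k : nat, (1 <= k <= N)%N -> gamma k <= gamma N) :
  (forall z : R[i],
        eigenvalue (map_mx (fun x : R => x%:C) (Gamma_mx N gamma)) z -> 0 < z).
Proof.
move=> z /eig_tr /eigenvalueP [x xe xn0].
have hg : forall j : 'I_(N - 1), 0 < gamma j.+1 /\ gamma j.+1 <= gamma N.
  move=> j; have hj : (1 <= j.+1 <= N)%N.
    by have := ltn_ord j; lia.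
  by split; [apply: hpos | apply: hmax].
set c := gamma N.
pose e (k : 'I_(N - 1)) := N%:R^-1 * (c - gamma k.+1).
have e0 : forall k, 0 <= e k.
  move=> k; rewrite /e; apply: mulr_ge0; first by rewrite invr_ge0 ler0n.
  by case: (hg k) => _ h; rewrite subr_ge0.
set s := \sum_k (e k)%:C * x 0 k.
have E : forall i : 'I_(N - 1), (z - (gamma i.+1)%:C) * x 0 i = s.
  move=> i; move/matrixP: (xe) => /(_ 0 i) H; rewrite [LHS]mxE [RHS]mxE in H.
  have H2 : \sum_k x 0 k * (map_mx (fun x : R => x%:C) (Gamma_mx N gamma))^T k i
     = x 0 i * (gamma i.+1)%:C + s.
    under eq_bigr => k _ do rewrite trmap GammaE rmorphB rmorphM mulrBr.
    rewrite sumrB (bigD1 i) //= eqxx big1 ?addr0; last first.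
      by move=> k /negbTE; rewrite eq_sym => ->; rewrite mul0r mulr0.
    rewrite mul1r /s -sumrN; congr (_ + _); apply: eq_bigr => k _.
    by rewrite mulrC -mulNr -rmorphN /e -mulrN opprB.
  by rewrite mulrBl -H H2; ring.
have gC : forall k : 'I_(N - 1), 0 < (gamma k.+1)%:C :> R[i].
  by move=> k; rewrite ltcE /= eqxx /=; case: (hg k).
pose w k := (e k)%:C * (x 0 k * conjc (x 0 k)).
have w0 : forall k, 0 <= w k.
  by move=> k; apply: mulr_ge0; [rewrite ler0c | exact: mulcJ_ge0].
have ss : s * conjc s = \sum_k (z * w k - (gamma k.+1)%:C * w k).
  rewrite {2}/s rmorph_sum mulr_sumr; apply: eq_bigr => k _.
  change (s * conjc ((e k)%:C * x 0 k) = z * w k - (gamma k.+1)%:C * w k).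
  rewrite (_ : conjc ((e k)%:C * x 0 k) = (e k)%:C * conjc (x 0 k)); last first.
    by rewrite rmorphM; congr (_ * _); exact: conjc_real.
  by rewrite -{1}(E k) /w; ring.
rewrite sumrB -mulr_sumr in ss.
have key : z * \sum_(k < N - 1) w k = \sum_(k < N - 1) (gamma k.+1)%:C * w k + s * conjc s.
  by rewrite ss; ring.
have A0 : 0 <= \sum_(k < N - 1) w k by apply: sumr_ge0 => k _.
case: (eqVneq (\sum_(k < N - 1) w k) 0) => [Aeq|Ane].
  have wk : forall k, w k = 0.
    by move=> k; apply: (psumr_eq0P (fun k _ => w0 k) Aeq).
  have s0 : s = 0.
    rewrite /s big1 // => k _; have := wk k; rewrite /w => /eqP.
    rewrite mulf_eq0 => /orP [/eqP -> | ]; first by rewrite mul0r.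
    by rewrite mulf_eq0 conjc_eq0 orbb => /eqP ->; rewrite mulr0.
  have : exists j, x 0 j != 0.
    apply/existsP; move: xn0; apply: contraR; rewrite negb_exists => /forallP H.
    by apply/eqP/matrixP => i k; rewrite (ord1 i) mxE; move: (H k); rewrite negbK => /eqP.
  case=> j xj.
  have := E j; rewrite s0 => /eqP; rewrite mulf_eq0 (negbTE xj) orbF subr_eq0 => /eqP ->.
  exact: gC.
have Apos : 0 < \sum_(k < N - 1) w k by rewrite lt_def Ane A0.
have B0 : 0 <= \sum_(k < N - 1) (gamma k.+1)%:C * w k.
  by apply: sumr_ge0 => k _; apply: mulr_ge0; [apply: ltW | ].
have Bne : \sum_(k < N - 1) (gamma k.+1)%:C * w k != 0.
  apply/negP => /eqP Beq.
  have H := psumr_eq0P (fun k _ => mulr_ge0 (ltW (gC k)) (w0 k)) Beq.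
  move/negP: Ane; apply; apply/eqP; apply: big1 => k _.
  by move: (H k isT) => /eqP; rewrite mulf_eq0 (gt_eqF (gC k)) /= => /eqP.
have Bpos : 0 < \sum_(k < N - 1) (gamma k.+1)%:C * w k by rewrite lt_def Bne B0.
have zA : 0 < z * \sum_(k < N - 1) w k.
  rewrite key; apply: (lt_le_trans Bpos); rewrite lerDl; exact: mulcJ_ge0.
by rewrite -(mulfK Ane z); apply: divr_gt0.
Qed.

Lemma tst (R : realFieldType) (g c b t : R) : 0 < g -> g <= c ->
  g * b^+2 / 2 <= g * b^+2 - g * b * t + c * t^+2.
Proof. move=> h1 h2.
have h3 : 0 <= (c - g) * t^+2 by apply: mulr_ge0; [lra| exact: sqr_ge0].
have h4 : 0 <= g * (t - b/2)^+2 by apply: mulr_ge0; [lra| exact: sqr_ge0].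
have h5 : 0 <= g * b^+2 by apply: mulr_ge0; [lra| exact: sqr_ge0].
have H : g * b^+2 - g * b * t + c * t^+2 - g * b^+2 / 2 = (c - g) * t^+2 + g * (t - b/2)^+2 + g * b^+2 / 4.
  by field.
rewrite -subr_ge0 H; lra.
Qed.

Lemma rowsum (R : rcfType) (N : nat) (gamma : nat -> R) (b : 'cV[R]_(N - 1)) j :
  \sum_i b i 0 * Gamma_mx N gamma i j =
  b j 0 * gamma j.+1 - N%:R^-1 * (gamma j.+1 - gamma N) * \sum_i b i 0.
Proof.
under eq_bigr => i _ do rewrite GammaE mulrBr.
rewrite sumrB (bigD1 j) //= eqxx mul1r big1 ?addr0; last first.
  by move=> i /negbTE; rewrite eq_sym => ->; rewrite mul0r mulr0.
by rewrite mulr_sumr; congr (_ - _); apply: eq_bigr => i _; rewrite mulrC.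
Qed.

Lemma pd_part (R : rcfType) (N : nat) (gamma : nat -> R)
  (hN : (2 <= N)%N)
  (hpos : forall k : nat, (1 <= k <= N)%N -> 0 < gamma k)
  (hmax : forall k : nat, (1 <= k <= N)%N -> gamma k <= gamma N) :
  (forall b : 'cV[R]_(N - 1), b != 0 -> 0 < (b^T *m Gamma_mx N gamma *m b) 0 0).
Proof.
move=> b bn0.
have hg : forall j : 'I_(N - 1), 0 < gamma j.+1 /\ gamma j.+1 <= gamma N.
  move=> j; have hj : (1 <= j.+1 <= N)%N.
    by have := ltn_ord j; lia.
  by split; [apply: hpos | apply: hmax].
set c := gamma N.
set S := \sum_i b i 0.
have hN0 : 0 < N%:R :> R by rewrite ltr0n; lia.
set t := S / N%:R.
have E : (b^T *m Gamma_mx N gamma *m b) 0 0 =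
   \sum_(j < N - 1) (gamma j.+1 * b j 0 ^+ 2 - gamma j.+1 * b j 0 * t + c * t ^+ 2)
   + c * t^+2 * (N%:R - (N - 1)%:R).
  rewrite mxE.
  under eq_bigr => j _ do rewrite mxE.
  under eq_bigr => j _ do under eq_bigr => i _ do rewrite mxE.
  under eq_bigr => j _ do rewrite rowsum -/S.
  have -> : (N - 1)%:R = \sum_(j < N - 1) (1 : R) by rewrite sumr_const card_ord -mulr_natr mul1r.
  have hS : S = t * N%:R by rewrite /t divfK // gt_eqF.
  rewrite mulrBr.
  have -> : c * t^+2 * N%:R = \sum_j c * t * b j 0.
    by rewrite -mulr_sumr -/S hS; ring.
  rewrite mulr_sumr -sumrB -big_split /=.
  apply: eq_bigr => j _.
  by rewrite hS /c; field; rewrite gt_eqF.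
have hnn : (N - 1)%:R <= N%:R :> R by rewrite ler_nat; lia.
have ct : 0 <= c * t^+2 * (N%:R - (N - 1)%:R).
  have c0 : 0 < c by apply: hpos; lia.
  have t0 : 0 <= t^+2 by apply: sqr_ge0.
  apply: mulr_ge0; last by lra.
  by apply: mulr_ge0; lra.
have : exists j, b j 0 != 0.
  apply/existsP; move: bn0; apply: contraR; rewrite negb_exists => /forallP H.
  by apply/eqP/matrixP => i k; rewrite (ord1 k) mxE; move: (H i); rewrite negbK => /eqP.
case=> j bj.
have L : \sum_(j0 < N - 1) (gamma j0.+1 * b j0 0 ^+ 2 / 2) <=
   \sum_(j0 < N - 1) (gamma j0.+1 * b j0 0 ^+ 2 - gamma j0.+1 * b j0 0 * t + c * t ^+ 2).
  by apply: ler_sum => i _; case: (hg i) => h1 h2; apply: tst.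
have P : 0 < \sum_(j0 < N - 1) (gamma j0.+1 * b j0 0 ^+ 2 / 2).
  rewrite (bigD1 j) //=.
  have h1 : 0 < gamma j.+1 * b j 0 ^+ 2 / 2.
    apply: divr_gt0 => //; apply: mulr_gt0; first by case: (hg j).
    by rewrite lt_def sqr_ge0 andbT sqrf_eq0.
  have h2 : 0 <= \sum_(i | i != j) (gamma i.+1 * b i 0 ^+ 2 / 2).
    apply: sumr_ge0 => i _; apply: divr_ge0 => //; apply: mulr_ge0; last exact: sqr_ge0.
    by apply: ltW; case: (hg i).
  lra.
rewrite E; lra.
Qed.

Local Open Scope complex_scope.

Theorem lemma7p1 (R : rcfType) (N : nat) (gamma : nat -> R)
  (hN : (2 <= N)%N)
  (hpos : forall k : nat, (1 <= k <= N)%N -> 0 < gamma k)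
  (hmax : forall k : nat, (1 <= k <= N)%N -> gamma k <= gamma N) :
  (forall b : 'cV[R]_(N - 1), b != 0 -> 0 < (b^T *m Gamma_mx N gamma *m b) 0 0)
  /\ (forall z : R[i],
        eigenvalue (map_mx (fun x : R => x%:C) (Gamma_mx N gamma)) z -> 0 < z).
Proof.
split; [exact: pd_part | exact: eig_part].
Qed.
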